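(* Under Assumption 1, let $(x^k)_{k\in\mathbb{N}}$ be generated by PPGA. Then $(x^k)$ is bounded and every accumulation point of $(x^k)$ is a stationary point of $F$.
   Context: Let $f:\mathbb{R}^n\to(-\infty,+\infty]$ be proper lsc, $g,h:\mathbb{R}^n\to\mathbb{R}$, $\Omega:=\{x:g(x)\ne0\}$, $F(x):=\frac{f(x)+h(x)}{g(x)}$ on $\Omega\cap\mathrm{dom}(f)$ and $+\infty$ otherwise. Assumption 1: (i) $f$ locally Lipschitz on $\mathrm{dom}(f)\cap\Omega$; (ii) $g$ locally Lipschitz continuously differentiable and positive on $\Omega\cap\mathrm{dom}(f)$; (iii) $\nabla h$ is $L$-Lipschitz, $L>0$; (iv) $f+h\ge0$ on $\mathrm{dom}(f)$, $\Omega\cap\mathrm{dom}(f)\ne\emptyset$; (v) $\mathrm{prox}_{f-\gamma g}(x)\ne\emptyset$ for all $x$, $\gamma\ge0$; (vi) $F$ lsc and level bounded. $\mathrm{prox}_\varphi(x):=\arg\min_u\{\varphi(u)+\frac12\|u-x\|_2^2\}$. Fréchet subdifferential: $\hat\partial\varphi(x):=\{v:\liminf_{z\to x,z\ne x}\frac{\varphi(z)-\varphi(x)-\langle v,z-x\rangle}{\|z-x\|_2}\ge0\}$; a stationary point of $F$ is $x^\star$ with $0\in\hat\partial F(x^\star)$. PPGA: choose $x^0\in\Omega\cap\mathrm{dom}(f)$ and $0<\underline\alpha\le\alpha_k\le\overline\alpha<1/L$; for $k=0,1,\dots$ set $C_k:=F(x^k)$ and pick any $x^{k+1}\in\mathrm{prox}_{\alpha_k(f-C_kg)}(x^k-\alpha_k\nabla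 h(x^k))$. *)

(* Defs.v *)
From HB Require Import structures.
From mathcomp Require Import all_boot all_order all_algebra.
From mathcomp Require Import all_classical all_reals ereal.
Set Implicit Arguments. Unset Strict Implicit. Unset Printing Implicit Defensive.
Import Order.TTheory GRing.Theory Num.Theory.
Local Open Scope ring_scope.
Local Open Scope ereal_scope.

Section Defs.
Variables (R : realType) (n : nat).
Notation V := 'rV[R]_n.

Definition dot (x y : V) : R := (\sum_(i < n) x 0 i * y 0 i)%R.
Definition norm2 (x : V) : R := Num.sqrt (dot x x).

Definition dom (f : V -> \bar R) : set V := [set x | f x != +oo].

Definition proper_fun (f : V -> \bar R) : Prop :=
  (forall x, f x != -oo) /\ (exists x, f x != +oo).

Definition lsc (f : V -> \bar R) : Prop :=
  forall x (a : R), a%:E < f x ->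
    exists delta : R, (0 < delta)%R /\
      forall z, (norm2 (z - x) < delta)%R -> a%:E < f z.

Definition level_bounded (f : V -> \bar R) : Prop :=
  forall a : R, exists M : R, forall x, f x <= a%:E -> (norm2 x <= M)%R.

Definition loc_lipschitz_on (S : set V) (u : V -> R) : Prop :=
  forall x, S x -> exists delta K : R, (0 < delta)%R /\
    forall y z, S y -> S z -> (norm2 (y - x) < delta)%R -> (norm2 (z - x) < delta)%R ->
      (`|u y - u z| <= K * norm2 (y - z))%R.

Definition loc_lipschitz_on_vec (S : set V) (u : V -> V) : Prop :=
  forall x, S x -> exists delta K : R, (0 < delta)%R /\
    forall y z, S y -> S z -> (norm2 (y - x) < delta)%R -> (norm2 (z - x) < delta)%R ->
      (norm2 (u y - u z) <= K * norm2 (y - z))%R.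

Definition is_gradient (u : V -> R) (x gv : V) : Prop :=
  forall eps : R, (0 < eps)%R -> exists delta : R, (0 < delta)%R /\
    forall z, (norm2 (z - x) < delta)%R ->
      (`|u z - u x - dot gv (z - x)| <= eps * norm2 (z - x))%R.

Definition lipschitz_vec (L : R) (u : V -> V) : Prop :=
  forall x y, (norm2 (u x - u y) <= L * norm2 (x - y))%R.

Definition Omega (g : V -> R) : set V := [set x | g x != 0%R].

Definition Ffrac (f : V -> \bar R) (g h : V -> R) (x : V) : \bar R :=
  if (g x != 0%R) && (f x != +oo)
  then (((fine (f x) + h x) / g x)%R)%:E else +oo.

Definition in_prox (phi : V -> \bar R) (x u : V) : Prop :=
  forall w, phi u + ((norm2 (u - x)) ^+ 2 / 2)%:E
            <= phi w + ((norm2 (w - x)) ^+ 2 / 2)%:E.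

(* Frechet subdifferential: v \in \hat\partial phi(x)  (requires phi x finite);
   liminf_{z->x, z<>x} (phi z - phi x - <v,z-x>)/||z-x|| >= 0, unfolded. *)
Definition frechet_subgrad (phi : V -> \bar R) (x v : V) : Prop :=
  phi x \is a fin_num /\
  forall eps : R, (0 < eps)%R -> exists delta : R, (0 < delta)%R /\
    forall z, z != x -> (norm2 (z - x) < delta)%R ->
      phi x + (dot v (z - x) - eps * norm2 (z - x))%:E <= phi z.

Definition stationary (phi : V -> \bar R) (x : V) : Prop := frechet_subgrad phi x 0.

Definition accumulation_point (xs : nat -> V) (xbar : V) : Prop :=
  exists phi : nat -> nat, (forall j, (phi j < phi j.+1)%N) /\
    forall eps : R, (0 < eps)%R -> exists N, forall j, (N <= j)%N ->
      (norm2 (xs (phi j) - xbar) < eps)%R.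

Definition bounded_seq (xs : nat -> V) : Prop :=
  exists M : R, forall k, (norm2 (xs k) <= M)%R.

End Defs.

(* Main.v *)
Require Import Defs.
From HB Require Import structures.
From mathcomp Require Import all_boot all_order all_algebra.
From mathcomp Require Import all_classical all_reals ereal.
From mathcomp Require Import all_analysis.
From mathcomp Require Import ring lra.
Require Import Defs.
Import Order.TTheory GRing.Theory Num.Theory.
Import numFieldNormedType.Exports.
Local Open Scope ring_scope.
Local Open Scope classical_set_scope.
Set Implicit Arguments. Unset Strict Implicit. Unset Printing Implicit Defensive.

Section Vec.
Variables (R : realType) (n : nat).
Implicit Types (x y z : 'rV[R]_n) (a b : R).

Lemma dotC x y : dot x y = dot y x.
Proof. by rewrite /dot; apply: eq_bigr => i _; rewrite mulrC. Qed.

Lemma dotDl x y z : dot (x + y) z = dot x z + dot y z.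
Proof. by rewrite /dot -big_split; apply: eq_bigr => i _; rewrite mxE mulrDl. Qed.

Lemma dotDr x y z : dot z (x + y) = dot z x + dot z y.
Proof. by rewrite dotC dotDl !(dotC z). Qed.

Lemma dotZl a x y : dot (a *: x) y = a * dot x y.
Proof. by rewrite /dot mulr_sumr; apply: eq_bigr => i _; rewrite mxE mulrA. Qed.

Lemma dotZr a x y : dot y (a *: x) = a * dot y x.
Proof. by rewrite dotC dotZl dotC. Qed.

Lemma dotNl x y : dot (- x) y = - dot x y.
Proof. by rewrite -scaleN1r dotZl mulN1r. Qed.

Lemma dotNr x y : dot y (- x) = - dot y x.
Proof. by rewrite dotC dotNl dotC. Qed.

Lemma dotBl x y z : dot (x - y) z = dot x z - dot y z.
Proof. by rewrite dotDl dotNl. Qed.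

Lemma dotBr x y z : dot z (x - y) = dot z x - dot z y.
Proof. by rewrite dotDr dotNr. Qed.

Lemma dot0l x : dot 0 x = 0.
Proof. by rewrite /dot big1 // => i _; rewrite mxE mul0r. Qed.

Lemma dot0r x : dot x 0 = 0.
Proof. by rewrite dotC dot0l. Qed.

Lemma dot_ge0 x : 0 <= dot x x.
Proof. by rewrite /dot sumr_ge0 // => i _; rewrite -expr2 sqr_ge0. Qed.

Lemma norm2_ge0 x : 0 <= norm2 x.
Proof. exact: sqrtr_ge0. Qed.

Lemma norm2_sq x : norm2 x ^+ 2 = dot x x.
Proof. by rewrite /norm2 sqr_sqrtr // dot_ge0. Qed.

Lemma CS x y : `|dot x y| <= norm2 x * norm2 y.
Proof.
have key : forall t, 0 <= dot x x - 2 * t * dot x y + t ^+ 2 * dot y y.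
  move=> t; have := dot_ge0 (x - t *: y).
  rewrite !dotBl !dotBr !dotZl !dotZr (dotC y x); lra.
rewrite -ler_sqr ?nnegrE ?normr_ge0 ?mulr_ge0 ?norm2_ge0 // !exprMn !norm2_sq real_normK ?num_real.
have [Hy|Hy] := eqVneq (dot y y) 0.
  have Hxy : dot x y = 0.
    apply/eqP; apply/negPn/negP => Hne.
    have := key ((dot x x + 1) / (2 * dot x y)); rewrite Hy mulr0 addr0.
    have -> : 2 * ((dot x x + 1) / (2 * dot x y)) * dot x y = dot x x + 1.
      by field; rewrite Hne.
    lra.
  by rewrite Hxy Hy expr0n /= mulr0.
have Hyp : 0 < dot y y by rewrite lt0r Hy dot_ge0.
have := key (dot x y / dot y y).
have -> : 2 * (dot x y / dot y y) * dot x y = 2 * (dot x y ^+ 2 / dot y y) by field; rewrite Hy.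
have -> : (dot x y / dot y y) ^+ 2 * dot y y = dot x y ^+ 2 / dot y y by field; rewrite Hy.
move=> H.
have H2 : dot x y ^+ 2 / dot y y <= dot x x by lra.
by rewrite -ler_pdivrMr.
all: done.
Qed.

Lemma norm2_sqD x y : norm2 (x + y) ^+ 2 = norm2 x ^+ 2 + 2 * dot x y + norm2 y ^+ 2.
Proof. rewrite !norm2_sq !dotDl !dotDr (dotC y x); lra. Qed.

Lemma norm2_sqB x y : norm2 (x - y) ^+ 2 = norm2 x ^+ 2 - 2 * dot x y + norm2 y ^+ 2.
Proof. rewrite !norm2_sq !dotBl !dotBr (dotC y x); lra. Qed.

Lemma norm2N x : norm2 (- x) = norm2 x.
Proof. by rewrite /norm2 dotNl dotNr opprK. Qed.

Lemma norm2B x y : norm2 (x - y) = norm2 (y - x).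
Proof. by rewrite -norm2N opprB. Qed.

Lemma norm2Z a x : norm2 (a *: x) = `|a| * norm2 x.
Proof.
by rewrite /norm2 dotZl dotZr mulrA -expr2 sqrtrM ?sqr_ge0 // sqrtr_sqr.
Qed.

Lemma norm2_0 : norm2 (0 : 'rV[R]_n) = 0.
Proof. by rewrite /norm2 dot0l sqrtr0. Qed.

Lemma norm2D x y : norm2 (x + y) <= norm2 x + norm2 y.
Proof.
rewrite -ler_sqr ?nnegrE ?addr_ge0 ?norm2_ge0 // norm2_sqD.
have := CS x y; have := ler_norm (dot x y).
have := norm2_ge0 x; have := norm2_ge0 y; nra.
Qed.

Lemma coord_le x i : `|x 0 i| <= norm2 x.
Proof.
rewrite -ler_sqr ?nnegrE ?normr_ge0 ?norm2_ge0 // norm2_sq real_normK ?num_real /dot.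
rewrite (bigD1 i) //= -expr2 lerDl.
apply: sumr_ge0 => j _; first by rewrite -expr2 sqr_ge0.
all: done.
Qed.

Lemma norm2_le_coord x r : 0 <= r -> (forall i, `|x 0 i| <= r) -> norm2 x <= n.+1%:R * r.
Proof.
move=> r0 H.
have H2 : norm2 x ^+ 2 <= n%:R * r ^+ 2.
  rewrite norm2_sq /dot -[n in n%:R]card_ord -sum1_card natr_sum mulr_suml.
  apply: ler_sum => i _; rewrite mul1r -expr2 -real_normK ?num_real //.
  by rewrite lerXn2r ?nnegrE ?normr_ge0 // (le_trans (normr_ge0 _) (H i)).
rewrite -ler_sqr ?nnegrE ?norm2_ge0 ?mulr_ge0 //; apply: (le_trans H2).
have hn : 0 <= n%:R :> R by [].
rewrite exprMn -natrX; apply: ler_wpM2r; first by rewrite sqr_ge0.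
by rewrite ler_nat; apply: (leq_trans (leqnSn n)); rewrite -{1}(expn1 n.+1) leq_pexp2l.
Qed.
End Vec.


Section Desc.
Variables (R : realType) (n : nat).
Implicit Types (x y z : 'rV[R]_n) (a b : R).

Lemma line_derive (h : 'rV[R]_n -> R) (gh : 'rV[R]_n -> 'rV[R]_n) x d (t : R) :
  is_gradient h (x + t *: d) (gh (x + t *: d)) ->
  is_derive t 1 (fun s : R => h (x + s *: d)) (dot (gh (x + t *: d)) d).
Proof.
move=> Hg.
set D := dot _ d.
have Hc : (fun s : R => s^-1 *: (h (x + (s *: 1 + t) *: d) - h (x + t *: d))) @ 0^' --> D.
  apply/cvgrPdist_lt => e e0.
  have ep : 0 < e / (norm2 d + 1) by rewrite divr_gt0 // ltr_pwDr ?norm2_ge0.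
  have [del [del0 Hdel]] := Hg _ ep.
  apply/nbhs_normP; exists (del / (norm2 d + 1)).
    by rewrite /= divr_gt0 // ltr_pwDr ?norm2_ge0.
  move=> s /= Hs s0.
  have -> : x + (s%:A + t) *: d = (x + t *: d) + s *: d.
    have E : s%:A = s :> R by rewrite /GRing.scale /= mulr1.
    by rewrite E scalerDl addrA addrAC.
  set p := x + t *: d.
  have N0 := norm2_ge0 d.
  have Hs' : `|s| * norm2 d < del.
    rewrite distrC subr0 in Hs.
    have : `|s| * (norm2 d + 1) < del by rewrite -ltr_pdivlMr // ltr_pwDr.
    have := normr_ge0 s; nra.
  have := Hdel (p + s *: d).
  rewrite addrAC subrr add0r norm2Z => /(_ Hs').
  rewrite dotZr /D.
  set A := h (p + s *: d) - h p.
  set B := dot (gh p) d.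
  move=> H1.
  have sn : 0 < `|s| by rewrite normr_gt0.
  have -> : B - s^-1 *: A = - (s^-1 * (A - s * B)).
    rewrite /GRing.scale /=; field; exact: s0.
  rewrite normrN normrM normrV ?unitfE //.
  have H2 : `|A - s * B| <= e * `|s| * (norm2 d / (norm2 d + 1)).
    suff -> : e * `|s| * (norm2 d / (norm2 d + 1)) = e / (norm2 d + 1) * (`|s| * norm2 d) by [].
    by field; rewrite gt_eqF // ltr_pwDr.
  rewrite -ltr_pdivlMl ?invr_gt0 // invrK.
  apply: (le_lt_trans H2).
  have : norm2 d / (norm2 d + 1) < 1 by rewrite ltr_pdivrMr ?ltr_pwDr // mul1r ltrDl.
  have := divr_ge0 N0 (ltW (ltr_pwDr ltr01 N0)).
  have := mulr_gt0 sn e0.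
  nra.
have Hd : derivable (fun s : R => h (x + s *: d)) t 1 by apply/cvgP: Hc.
by apply: DeriveDef => //; exact: cvg_lim.
Qed.

Lemma descent (h : 'rV[R]_n -> R) (gh : 'rV[R]_n -> 'rV[R]_n) (L : R) x y :
  (forall z, is_gradient h z (gh z)) -> lipschitz_vec L gh -> 0 <= L ->
  h y <= h x + dot (gh x) (y - x) + L / 2 * norm2 (y - x) ^+ 2.
Proof.
move=> Hg Hl L0.
set d := y - x.
set B0 := dot (gh x) d.
set c0 := L / 2 * norm2 d ^+ 2.
pose phi := fun s : R => h (x + s *: d).
pose psi : R -> R := phi - ((@id R) * cst B0) - (c0 \*: ((@id R) * (@id R))).
pose dpsi := fun t : R => dot (gh (x + t *: d)) d - B0 - c0 * (t + t).
have Hd : forall t : R, is_derive t 1 psi (dpsi t).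
  move=> t.
  have H1 := line_derive (Hg (x + t *: d)).
  have H2 := is_deriveM (is_derive_id t (1:R)) (is_derive_cst B0 t 1).
  have H3 := is_deriveZ c0 (is_deriveM (is_derive_id t (1:R)) (is_derive_id t (1:R))).
  have H4 := is_deriveB (is_deriveB H1 H2) H3.
  apply: is_derive_eq H4 _.
  by rewrite /dpsi /= /GRing.scale /= mulr0 add0r !mulr1.
have [c c01 Hc] : exists2 c : R, c \in `]0, 1[%R & psi 1 - psi 0 = dpsi c * (1 - 0).
  apply: (@MVT R psi dpsi 0 1 ltr01).
  apply: derivable_within_continuous => t Ht.
  by case: (Hd t).
have Hc0 : 0 < c by move: c01; rewrite in_itv /= => /andP[].
have Hdc : dpsi c <= 0.
  rewrite /dpsi.
  have := CS (gh (x + c *: d) - gh x) d.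
  rewrite dotBl -/B0.
  have := Hl (x + c *: d) x.
  rewrite addrAC subrr add0r norm2Z (ger0_norm (ltW Hc0)).
  have := norm2_ge0 d; have := norm2_ge0 (gh (x + c *: d) - gh x).
  set u := dot _ d; set a := norm2 (_ - _).
  move=> ha hd Hla HCS.
  have Hu : u - B0 <= a * norm2 d by have := ler_norm (u - B0); lra.
  have : a * norm2 d <= L * (c * norm2 d) * norm2 d by apply: ler_wpM2r.
  rewrite /c0; nra.
have E1 : x + 1 *: d = y by rewrite scale1r /d addrC subrK.
have E0 : x + 0 *: d = x by rewrite scale0r addr0.
have E : psi 1 - psi 0 = h y - h x - B0 - c0.
  change (h (x + 1 *: d) - 1 * B0 - c0 * (1 * 1) - (h (x + 0 *: d) - 0 * B0 - c0 * (0 * 0)) = h y - h x - B0 - c0).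
  rewrite E1 E0; ring.
rewrite E subr0 mulr1 in Hc.
move: Hc Hdc; lra.
Qed.
End Desc.


Section Topo.
Variables (R : realType) (n : nat).
Implicit Types (x y z : 'rV[R]_n).

Lemma coord_le_mx x i : `|x 0 i| <= `|x|.
Proof. by change (`|x 0 i| <= mx_norm x); rewrite mx_normrE; exact: (le_bigmax _ _ (0, i)). Qed.

Lemma mx_le_norm2 x : `|x| <= norm2 x.
Proof.
change (mx_norm x <= norm2 x); rewrite mx_normrE; apply: bigmax_le; first exact: norm2_ge0.
move=> [i j] _ /=; rewrite (ord1 i); exact: coord_le.
Qed.

Lemma norm2_le_mx x : norm2 x <= n.+1%:R * `|x|.
Proof. by apply: norm2_le_coord => //; exact: coord_le_mx. Qed.

Lemma nbhs_norm2 x (P : 'rV[R]_n -> Prop) (d : R) : 0 < d ->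
  (forall z, norm2 (z - x) < d -> P z) -> \forall z \near x, P z.
Proof.
move=> d0 H; apply/nbhs_normP.
exists (d / n.+1%:R); first by rewrite /= divr_gt0.
move=> z /= Hz; apply: H.
apply: (le_lt_trans (norm2_le_mx _)).
by rewrite -opprB normrN mulrC -ltr_pdivlMr.
Qed.

Lemma grad_cont (g : 'rV[R]_n -> R) x gv : is_gradient g x gv -> continuous_at x g.
Proof.
move=> Hg; rewrite /continuous_at; apply/(@cvgrPdist_lt _ _ _ _ (nbhs_filter x)) => e e0.
have [del [del0 Hdel]] := Hg 1 ltr01.
set K := norm2 gv + 1.
have K0 : 0 < K by rewrite /K ltr_pwDr ?norm2_ge0.
apply: (@nbhs_norm2 _ _ (Num.min del (e / K))).
  by rewrite lt_min del0 divr_gt0.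
move=> z; rewrite lt_min => /andP[Hz1 Hz2].
have := Hdel z Hz1; rewrite mul1r => H1.
have := CS gv (z - x); have := ler_norm (dot gv (z - x)).
have := norm2_ge0 (z - x); have := norm2_ge0 gv.
rewrite ltr_pdivlMr // in Hz2.
rewrite distrC.
set u := dot gv _; set N := norm2 _ in H1 Hz2 *.
move=> Hg0 HN0 Hu HCS.
have : `|g z - g x| <= `|g z - g x - u| + `|u|.
  by rewrite -[X in `|X| <= _](subrK u) ler_normD.
have : `|u| <= norm2 gv * N by [].
rewrite /K in Hz2. nra.
Qed.

Lemma sublevel_gbound (F : 'rV[R]_n -> \bar R) (g : 'rV[R]_n -> R) (a M : R) :
  lsc F -> (forall x, (F x <= a%:E)%E -> norm2 x <= M) ->
  (forall x, (F x <= a%:E)%E -> continuous_at x g) ->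
  exists G, forall x, (F x <= a%:E)%E -> g x <= G.
Proof.
move=> Hl HM Hc.
set S := [set x | (F x <= a%:E)%E].
have Sc : closed S.
  rewrite -openC openE => x /= Hx.
  have Hx' : (a%:E < F x)%E by rewrite ltNge; apply/negP.
  have [d [d0 Hd]] := Hl x a Hx'.
  rewrite /interior /=.
  apply: (@nbhs_norm2 _ _ d d0) => z Hz /=.
  by apply/negP; rewrite -ltNge; exact: Hd.
have Sb : bounded_set S.
  exists M; split; first exact: num_real.
  move=> N MN x Sx.
  apply: (le_trans (mx_le_norm2 x)); apply: (le_trans (HM _ Sx)); exact: ltW.
have Sk := bounded_closed_compact Sb Sc.
have gc : {within S, continuous g}.
  apply: continuous_in_subspaceT => x; rewrite inE => Sx; exact: Hc.
have := compact_bounded (continuous_compact gc Sk).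
move=> [B [_ HB]].
exists (`|B| + 1) => x Sx.
have := HB (`|B| + 1); rewrite (le_lt_trans (real_ler_norm _)) ?num_real ?ltrDl //.
move=> /(_ isT (g x)) H.
have : `|g x| <= `|B| + 1 by apply: H; exists x.
by move/(le_trans (ler_norm _)).
Qed.
End Topo.


Section Conv.
Variables (R : realType) (n : nat).

Lemma cv_eps (u : nat -> R) l :
  (forall e, 0 < e -> exists N, forall j, (N <= j)%N -> `|u j - l| < e) -> u @ \oo --> l.
Proof.
move=> H; apply/cvgrPdist_lt => e e0.
have [N HN] := H e e0.
exists N => // j /= Hj; rewrite distrC; exact: HN.
Qed.

Lemma cv_dom (u r : nat -> R) l :
  (forall j, `|u j - l| <= r j) -> r @ \oo --> 0 -> u @ \oo --> l.
Proof.
move=> H Hr; apply: cv_eps => e e0.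
move/cvgrPdist_lt: Hr => /(_ e e0) [N _ HN].
exists N => j Hj; apply: le_lt_trans (H j) _.
have := HN j Hj; rewrite /= sub0r normrN => Hl.
exact: le_lt_trans (ler_norm _) Hl.
Qed.

Definition cvv (y : nat -> 'rV[R]_n) yb :=
  forall e, 0 < e -> exists N, forall j, (N <= j)%N -> norm2 (y j - yb) < e.

Lemma cvv_norm y yb : cvv y yb -> (fun j => norm2 (y j - yb)) @ \oo --> 0.
Proof.
move=> H; apply: cv_eps => e e0; have [N HN] := H e e0.
by exists N => j Hj; rewrite subr0 ger0_norm ?norm2_ge0 //; exact: HN.
Qed.

Lemma cvv_lip (u : 'rV[R]_n -> R) y yb (Q : 'rV[R]_n -> Prop) :
  cvv y yb -> (forall j, Q (y j)) ->
  (exists d K, 0 < d /\ forall z, Q z -> norm2 (z - yb) < d -> `|u z - u yb| <= K * norm2 (z - yb)) ->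
  (fun j => u (y j)) @ \oo --> u yb.
Proof.
move=> Hy HQ [d [K [d0 HK]]].
apply: cv_eps => e e0.
set K' := `|K| + 1.
have K0 : 0 < K' by rewrite /K' ltr_pwDr.
have m0 : 0 < Num.min d (e / K') by rewrite lt_min d0 divr_gt0.
have [N HN] := Hy _ m0.
exists N => j Hj; have := HN j Hj; rewrite lt_min => /andP[H1 H2].
apply: (le_lt_trans (HK _ (HQ j) H1)).
rewrite ltr_pdivlMr // in H2.
have := norm2_ge0 (y j - yb); have := ler_norm K.
rewrite /K' in H2 *; nra.
Qed.

Lemma cvv_dot (a b : nat -> 'rV[R]_n) ab bb :
  cvv a ab -> cvv b bb -> (fun j => dot (a j) (b j)) @ \oo --> dot ab bb.
Proof.
move=> Ha Hb.
apply: (@cv_dom _ (fun j => norm2 (a j - ab) * (norm2 bb + norm2 (b j - bb)) + norm2 ab * norm2 (b j - bb))).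
  move=> j.
  have -> : dot (a j) (b j) - dot ab bb = dot (a j - ab) (b j) + dot ab (b j - bb).
    by rewrite dotBl dotBr; ring.
  apply: (le_trans (ler_normD _ _)); apply: lerD; last exact: CS.
  apply: (le_trans (CS _ _)); apply: ler_wpM2l; first exact: norm2_ge0.
  by rewrite -{1}(subrK bb (b j)) addrC norm2D.
have -> : 0 = 0 * (norm2 bb + 0) + norm2 ab * 0 :> R by ring.
apply: cvgD; [apply: cvgM|apply: cvgMr]; try exact: cvv_norm.
by apply: cvgD; [exact: cvg_cst|exact: cvv_norm].
Qed.

Lemma cvv_normsub (y : nat -> 'rV[R]_n) yb w :
  cvv y yb -> (fun j => norm2 (w - y j)) @ \oo --> norm2 (w - yb).
Proof.
move=> Hy; apply: (@cv_dom _ (fun j => norm2 (y j - yb))); last exact: cvv_norm.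
move=> j.
have E1 : w - yb = (w - y j) + (y j - yb) by rewrite addrA subrK.
have E2 : w - y j = (w - yb) + (yb - y j) by rewrite addrA subrK.
have T1 := norm2D (w - y j) (y j - yb); rewrite -E1 in T1.
have T2 := norm2D (w - yb) (yb - y j); rewrite -E2 [norm2 (yb - _)]norm2B in T2.
rewrite ler_norml; apply/andP; split; lra.
Qed.

Lemma strict_ge (phi : nat -> nat) : (forall j, (phi j < phi j.+1)%N) -> forall j, (j <= phi j)%N.
Proof.
move=> H; elim => [|j IH] //; exact: leq_ltn_trans IH (H j).
Qed.

Lemma grad_lip (u : 'rV[R]_n -> R) x gv : is_gradient u x gv ->
  exists d K, 0 < d /\ forall z, True -> norm2 (z - x) < d -> `|u z - u x| <= K * norm2 (z - x).
Proof.
move=> Hg; have [d [d0 Hd]] := Hg 1 ltr01.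
exists d, (norm2 gv + 1); split => // z _ Hz.
have := Hd z Hz; rewrite mul1r => H1.
have := CS gv (z - x); have := ler_norm (dot gv (z - x)).
have : `|u z - u x| <= `|u z - u x - dot gv (z - x)| + `|dot gv (z - x)|.
  by rewrite -[X in `|X| <= _](subrK (dot gv (z - x))) ler_normD.
have := norm2_ge0 (z - x); lra.
Qed.
End Conv.


Lemma norm2_eq0 (R : realType) n (x : 'rV[R]_n) : norm2 x = 0 -> x = 0.
Proof.
move=> H; apply/rowP => i; rewrite mxE.
have := coord_le x i; rewrite H => Hi.
have : `|x 0 i| = 0 by apply/le_anti; rewrite Hi normr_ge0.
by move/eqP; rewrite normr_eq0 (_ : 0 = ord0) ?ord1 //; move/eqP.
Qed.

Local Open Scope ereal_scope.
Section Main.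
Variables (R : realType) (n : nat)
  (f : 'rV[R]_n -> \bar R) (g h : 'rV[R]_n -> R)
  (gradg gradh : 'rV[R]_n -> 'rV[R]_n) (L : R).
Hypothesis (Hfprop : proper_fun f) (Hflsc : lsc f)
  (Hi : loc_lipschitz_on (fun x => dom f x /\ Omega g x) (fun x => fine (f x)))
  (Hii_grad : forall x, dom f x -> Omega g x -> is_gradient g x (gradg x))
  (Hii_lip : loc_lipschitz_on_vec (fun x => dom f x /\ Omega g x) gradg)
  (Hii_pos : forall x, dom f x -> Omega g x -> (0 < g x)%R)
  (Hiii_grad : forall x, is_gradient h x (gradh x))
  (HL : (0 < L)%R) (Hiii_lip : lipschitz_vec L gradh)
  (Hiv_nonneg : forall x, dom f x -> (0 <= fine (f x) + h x)%R)
  (Hiv_ne : exists x, dom f x /\ Omega g x)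
  (Hv : forall (x : 'rV[R]_n) (gam : R), (0 <= gam)%R ->
          exists u, in_prox (fun w => f w - (gam * g w)%:E) x u)
  (Hvi_lsc : lsc (Ffrac f g h)) (Hvi_lb : level_bounded (Ffrac f g h)).
Variables (alpha : nat -> R) (alow aup : R) (xs : nat -> 'rV[R]_n).
Hypothesis (Halow : (0 < alow)%R) (Hale : (alow <= aup)%R) (Haup : (aup < 1 / L)%R)
  (Halpha : forall k, (alow <= alpha k <= aup)%R)
  (Hx0 : dom f (xs 0%N) /\ Omega g (xs 0%N))
  (Hstep : forall k : nat,
     in_prox (fun u => (alpha k)%:E * (f u - ((fine (Ffrac f g h (xs k))) * g u)%:E))
             (xs k - alpha k *: gradh (xs k)) (xs k.+1)).

Definition P x := dom f x /\ Omega g x.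
Let fr x := fine (f x).
Let F := Ffrac f g h.

Lemma domE x : dom f x -> f x = (fr x)%:E.
Proof.
rewrite /dom /= => H; rewrite /fr; case: Hfprop => Hno _.
by move: H (Hno x); case: (f x).
Qed.

Lemma FE x : P x -> F x = ((fr x + h x) / g x)%:E.
Proof. by case=> H1 H2; rewrite /F /Ffrac H2 /=; move: H1; rewrite /dom /= => ->. Qed.

Lemma FnE x : ~ P x -> F x = +oo%E.
Proof.
move=> H; rewrite /F /Ffrac; case: ifP => // /andP[H1 H2].
by exfalso; apply: H; split.
Qed.


Lemma ereal_aux (a c q : R) (v : \bar R) : (0 < a)%R -> v != -oo ->
  (a%:E * (v - c%:E) + q%:E) = (if v is r%:E then (a * (r - c) + q)%:E else +oo).
Proof.
move=> a0; case: v => [r| |] // _.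
by rewrite /= mulry gtr0_sg // mul1e.
Qed.

Lemma prox_ineq k : P (xs k) -> (dom f (xs k.+1) /\ forall w, dom f w ->
   (alpha k * (fr (xs k.+1) - fine (F (xs k)) * g (xs k.+1))
      + norm2 (xs k.+1 - (xs k - alpha k *: gradh (xs k))) ^+ 2 / 2
    <= alpha k * (fr w - fine (F (xs k)) * g w)
      + norm2 (w - (xs k - alpha k *: gradh (xs k))) ^+ 2 / 2)%R)%type.
Proof.
move=> Pk.
have a0 : (0 < alpha k)%R by case/andP: (Halpha k) => H _; exact: lt_le_trans Halow H.
have nm : forall u, f u != -oo by case: Hfprop.
have Hw := Hstep k.
have Hd1 : dom f (xs k.+1).
  have := Hw (xs k); rewrite !ereal_aux //; rewrite (domE Pk.1).
  rewrite /dom /=; case: (f (xs k.+1)) => //.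
have H2 : forall w, dom f w -> (alpha k * (fr (xs k.+1) - fine (F (xs k)) * g (xs k.+1))
      + norm2 (xs k.+1 - (xs k - alpha k *: gradh (xs k))) ^+ 2 / 2
    <= alpha k * (fr w - fine (F (xs k)) * g w)
      + norm2 (w - (xs k - alpha k *: gradh (xs k))) ^+ 2 / 2)%R.
  move=> w Hdw; have := Hw w; rewrite !ereal_aux // (domE Hdw) (domE Hd1).
  by rewrite lee_fin.
by split.
Qed.

Definition cc := (1 / (2 * aup) - L / 2)%R.

Lemma cc_gt0 : (0 < cc)%R.
Proof.
rewrite /cc subr_gt0.
have a0 : (0 < aup)%R by exact: lt_le_trans Halow Hale.
have : (aup * L < 1)%R by rewrite -ltr_pdivlMr // mulrC.
move=> H; rewrite ltr_pdivrMr // mulrC mulrA ltr_pdivlMr ?mulr_gt0 //.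
rewrite mulr1; nra.
Qed.

Lemma step k : P (xs k) -> (P (xs k.+1) /\ (cc * norm2 (xs k.+1 - xs k) ^+ 2 <= g (xs k.+1) * (fine (F (xs k)) - fine (F (xs k.+1))))%R)%type.
Proof.
move=> Pk.
have [Hd1 H2] := prox_ineq Pk.
have := H2 (xs k) Pk.1.
have a0 : (0 < alpha k)%R by case/andP: (Halpha k) => H _; exact: lt_le_trans Halow H.
have aup' : (alpha k <= aup)%R by case/andP: (Halpha k).
have Hdesc := descent (xs k) (xs k.+1) Hiii_grad Hiii_lip (ltW HL).
have HQ := Hiv_nonneg Hd1.
have gx0 : (0 < g (xs k))%R by apply: Hii_pos; case: Pk.
have EC : fine (F (xs k)) = ((fr (xs k) + h (xs k)) / g (xs k))%R by rewrite FE.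
have C0 : (0 <= fine (F (xs k)))%R by rewrite EC; apply: divr_ge0; [exact: Hiv_nonneg Pk.1 | exact: ltW].
have ccp := cc_gt0.
set x := xs k; set x1 := xs k.+1; set a := alpha k; set gv := gradh x.
set C := fine (F x).
have -> : (x1 - (x - a *: gv) = (x1 - x) + a *: gv)%R by rewrite opprB addrA addrAC.
have -> : (x - (x - a *: gv) = a *: gv)%R by rewrite opprB addrC subrK.
rewrite norm2_sqD !norm2Z dotZr (dotC _ gv).
set D := norm2 (x1 - x).
move=> Hmain.
have Hfx : (fr x - C * g x = - h x)%R by rewrite /C EC; field; rewrite gt_eqF.
rewrite Hfx in Hmain.
have K1 : (a * (fr x1 + h x1 - C * g x1) <= (a * L - 1) / 2 * D ^+ 2)%R.
  have := ler_wpM2l (ltW a0) Hdesc.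
  move: Hmain; rewrite /fr -/x -/x1 -/gv -/D -/a; lra.
have K2 : (fr x1 + h x1 - C * g x1 <= - cc * D ^+ 2)%R.
  rewrite -(ler_pM2l a0).
  apply: (le_trans K1).
  have D0 : (0 <= D ^+ 2)%R by rewrite sqr_ge0.
  have Hc : ((a * L - 1) / 2 <= a * - cc)%R.
    rewrite /cc; have ap : (0 < aup)%R by exact: lt_le_trans a0 aup'.
    have : (a / aup <= 1)%R by rewrite ler_pdivrMr // mul1r.
    have -> : (a * - (1 / (2 * aup) - L / 2) = a * L / 2 - (a / aup) / 2)%R by field; rewrite gt_eqF.
    lra.
  rewrite [X in (_ <= X)%R]mulrA; move: (ler_wpM2r D0 Hc) => /= H; exact: H.
have g1 : (0 < g x1)%R.
  rewrite ltNge; apply/negP => Hg1.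
  have : (C * g x1 <= 0)%R by rewrite mulr_ge0_le0.
  move=> HCg.
  have HD : (D ^+ 2 <= 0)%R.
    have : (cc * D ^+ 2 <= 0)%R by rewrite /fr in HQ K2; lra.
    by rewrite pmulr_rle0.
  have HD0 : D = 0%R.
    apply/eqP; rewrite -sqrf_eq0; apply/eqP; apply/le_anti; rewrite HD sqr_ge0 //.
  have := norm2_eq0 HD0; move/eqP; rewrite subr_eq0 => /eqP E.
  by move: Hg1; rewrite E leNgt gx0.
have P1 : P x1 by split => //; rewrite /Omega /= gt_eqF.
split => //.
rewrite (FE P1) /= -/C.
have -> : (g x1 * (C - (fr x1 + h x1) / g x1) = C * g x1 - (fr x1 + h x1))%R.
  by field; rewrite gt_eqF.
rewrite /fr in K2 *; lra.
Qed.

Lemma allP k : P (xs k).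
Proof. by elim: k => [|k IH] //; case: (step IH). Qed.

Definition Cs k := fine (F (xs k)).

Lemma Cmono k : (Cs k.+1 <= Cs k)%R.
Proof.
have [P1 H] := step (allP k).
have g1 : (0 < g (xs k.+1))%R by case: P1 => ? ?; exact: Hii_pos.
have : (0 <= g (xs k.+1) * (Cs k - Cs k.+1))%R.
  apply: le_trans H; apply: mulr_ge0; [exact: ltW cc_gt0 | exact: sqr_ge0].
by rewrite pmulr_rge0 // subr_ge0.
Qed.

Lemma Cle0 k : (Cs k <= Cs 0)%R.
Proof. by elim: k => [|k IH] //; exact: le_trans (Cmono k) IH. Qed.

Lemma Cge0 k : (0 <= Cs k)%R.
Proof.
rewrite /Cs (FE (allP k)) /=; have [H1 H2] := allP k.
by apply: divr_ge0; [exact: Hiv_nonneg | exact: ltW (Hii_pos H1 H2)].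
Qed.

Lemma FCs k : F (xs k) = (Cs k)%:E.
Proof. by rewrite /Cs (FE (allP k)). Qed.

Lemma P_of_le x (a : R) : F x <= a%:E -> P x.
Proof.
move=> H; apply: contrapT => nP; move: H; rewrite FnE //.
Qed.

Lemma xs_bounded : exists M, forall k, (norm2 (xs k) <= M)%R.
Proof.
have [M HM] := Hvi_lb (Cs 0).
by exists M => k; apply: HM; rewrite -/F FCs lee_fin Cle0.
Qed.

Lemma g_bound : exists G, (0 < G)%R /\ forall k, (g (xs k) <= G)%R.
Proof.
have [M HM] := Hvi_lb (Cs 0).
have Hc : forall x, F x <= (Cs 0)%:E -> continuous_at x g.
  move=> x /P_of_le [H1 H2]; exact: grad_cont (Hii_grad H1 H2).
have [G HG] := @sublevel_gbound R n F g (Cs 0) M Hvi_lsc HM Hc.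
exists (Num.max G 1)%R; split; first by rewrite lt_max ltr01 orbT.
by move=> k; rewrite le_max HG // FCs lee_fin Cle0.
Qed.

Lemma Cmono_le N k : (N <= k)%N -> (Cs k <= Cs N)%R.
Proof.
elim: k => [|k IH]; first by rewrite leqn0 => /eqP ->.
rewrite leq_eqVlt => /orP [/eqP -> //|]; rewrite ltnS => Hk.
exact: le_trans (Cmono k) (IH Hk).
Qed.

Lemma d_to0 e : (0 < e)%R -> exists N, forall k, (N <= k)%N -> (norm2 (xs k.+1 - xs k) < e)%R.
Proof.
move=> e0.
have [G [G0 HG]] := g_bound.
set E := [set y | exists k, y = Cs k].
have hi : has_inf E.
  split; first by exists (Cs 0); exists 0%N.
  by exists 0%R => y [k ->]; exact: Cge0.
have ccp := cc_gt0.
set eps := (cc * e ^+ 2 / G)%R.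
have eps0 : (0 < eps)%R by rewrite /eps divr_gt0 // mulr_gt0 // exprn_gt0.
have [y [N ->] HN] := inf_adherent eps0 hi.
exists N => k Hk.
have H1 : (Cs k <= Cs N)%R := Cmono_le Hk.
have H2 : (inf E <= Cs k.+1)%R by apply: ge_inf; [case: hi | exists k.+1].
have [P1 H] := step (allP k).
have g1 : (0 < g (xs k.+1))%R by case: P1 => ? ?; exact: Hii_pos.
have Hd : (0 <= Cs k - Cs k.+1)%R by rewrite subr_ge0 Cmono.
have H3 : (g (xs k.+1) * (Cs k - Cs k.+1) <= G * (Cs k - Cs k.+1))%R.
  by apply: ler_wpM2r => //; exact: HG.
have H4 : (G * (Cs k - Cs k.+1) < G * eps)%R.
  by rewrite ltr_pM2l //; lra.
have H5 : (G * eps = cc * e ^+ 2)%R by rewrite /eps; field; rewrite gt_eqF.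
rewrite -/(Cs k) -/(Cs k.+1) in H.
have H6 : (cc * norm2 (xs k.+1 - xs k) ^+ 2 < cc * e ^+ 2)%R by lra.
rewrite ltr_pM2l // in H6.
have := norm2_ge0 (xs k.+1 - xs k); nra.
Qed.

Lemma seq_ineq k w : dom f w ->
  (fr (xs k.+1) - Cs k * g (xs k.+1) <=
   fr w - Cs k * g w + norm2 (w - xs k) * norm2 (w - xs k) / (2 * alow)
   + dot (gradh (xs k)) (w - xs k.+1))%R.
Proof.
move=> Hw.
have [_ H2] := prox_ineq (allP k).
have := H2 w Hw.
have a0 : (0 < alpha k)%R by case/andP: (Halpha k) => H _; exact: lt_le_trans Halow H.
have alo : (alow <= alpha k)%R by case/andP: (Halpha k).
rewrite -/(Cs k).
set x := xs k; set x1 := xs k.+1; set a := alpha k; set gv := gradh x; set C := Cs k.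
have -> : (x1 - (x - a *: gv) = (x1 - x) + a *: gv)%R by rewrite opprB addrA addrAC.
have -> : (w - (x - a *: gv) = (w - x) + a *: gv)%R by rewrite opprB addrA addrAC.
rewrite (norm2_sqD (x1 - x)) (norm2_sqD (w - x)) !dotZr.
have Ed : (dot gv (w - x1) = dot (w - x) gv - dot (x1 - x) gv)%R.
  by rewrite (dotC gv) -dotBl opprB addrA subrK.
rewrite Ed.
set N := norm2 (w - x).
have HN : (N ^+ 2 / 2 <= a * (N * N / (2 * alow)))%R.
  have -> : (a * (N * N / (2 * alow)) = (a / alow) * (N ^+ 2 / 2))%R.
    by rewrite expr2; field; rewrite gt_eqF.
  have : (1 <= a / alow)%R by rewrite ler_pdivlMr // mul1r.
  have : (0 <= N ^+ 2 / 2)%R by rewrite divr_ge0 // sqr_ge0.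
  nra.
have Hd := sqr_ge0 (norm2 (x1 - x)).
move=> H.
rewrite -(ler_pM2l a0).
rewrite -expr2 -/a in HN *; lra.
Qed.

Lemma acc_P xbar (phi : nat -> nat) :
  cvv (fun j => xs (phi j)) xbar -> P xbar.
Proof.
move=> Hc; apply: contrapT => nP.
have H : (Cs 0)%:E < F xbar by rewrite FnE // ltry.
have [d [d0 Hd]] := Hvi_lsc H.
have [N HN] := Hc d d0.
have := Hd _ (HN N (leqnn N)).
by rewrite -/F FCs lte_fin ltNge Cle0.
Qed.

Lemma xs1_cvv xbar (phi : nat -> nat) : (forall j, (phi j < phi j.+1)%N) ->
  cvv (fun j => xs (phi j)) xbar -> cvv (fun j => xs (phi j).+1) xbar.
Proof.
move=> Hphi Hc e e0.
have e2 : (0 < e / 2)%R by rewrite divr_gt0.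
have [N1 HN1] := d_to0 e2.
have [N2 HN2] := Hc _ e2.
exists (maxn N1 N2) => j Hj.
have Hj1 : (N1 <= phi j)%N.
  apply: leq_trans (strict_ge Hphi j); apply: leq_trans Hj; exact: leq_maxl.
have Hj2 : (N2 <= j)%N by apply: leq_trans Hj; exact: leq_maxr.
have := HN1 _ Hj1; have := HN2 _ Hj2.
have := norm2D (xs (phi j).+1 - xs (phi j)) (xs (phi j) - xbar).
rewrite addrA subrK; lra.
Qed.

Lemma limit_ineq xbar (phi : nat -> nat) : (forall j, (phi j < phi j.+1)%N) ->
  cvv (fun j => xs (phi j)) xbar -> forall w, dom f w ->
  (- h xbar <= fr w - ((fr xbar + h xbar) / g xbar) * g w
     + norm2 (w - xbar) * norm2 (w - xbar) / (2 * alow) + dot (gradh xbar) (w - xbar))%R.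
Proof.
move=> Hphi Hc w Hw.
have Pb := acc_P Hc.
have [Pb1 Pb2] := Pb.
have gb0 : (0 < g xbar)%R := Hii_pos Pb1 Pb2.
have Hc1 := xs1_cvv Hphi Hc.
have frlip : exists d K, (0 < d)%R /\ forall z, P z -> (norm2 (z - xbar) < d)%R ->
    (`|fr z - fr xbar| <= K * norm2 (z - xbar))%R.
  have [d [K [d0 HK]]] := Hi Pb.
  exists d, K; split => // z Pz Hz; apply: HK => //.
  by rewrite subrr norm2_0.
have cfr : (fun j => fr (xs (phi j))) @ \oo --> fr xbar.
  exact: (cvv_lip Hc (fun j => allP _) frlip).
have cfr1 : (fun j => fr (xs (phi j).+1)) @ \oo --> fr xbar.
  exact: (cvv_lip Hc1 (fun j => allP _) frlip).
have glip := grad_lip (Hii_grad Pb1 Pb2).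
have hlip := grad_lip (Hiii_grad xbar).
have cg : (fun j => g (xs (phi j))) @ \oo --> g xbar.
  exact: (cvv_lip Hc (fun j => I) glip).
have cg1 : (fun j => g (xs (phi j).+1)) @ \oo --> g xbar.
  exact: (cvv_lip Hc1 (fun j => I) glip).
have ch : (fun j => h (xs (phi j))) @ \oo --> h xbar.
  exact: (cvv_lip Hc (fun j => I) hlip).
set Cb := ((fr xbar + h xbar) / g xbar)%R.
have cC : (fun j => Cs (phi j)) @ \oo --> Cb.
  have -> : (fun j => Cs (phi j)) = (fun j => (fr (xs (phi j)) + h (xs (phi j))) * (g (xs (phi j)))^-1)%R.
    by apply: funext => j; rewrite /Cs (FE (allP _)).
  apply: cvgM; first exact: cvgD.
  by apply: cvgV; [rewrite gt_eqF | exact: cg].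
have cgh : cvv (fun j => gradh (xs (phi j))) (gradh xbar).
  move=> e e0; have [N HN] := Hc (e / L)%R (divr_gt0 e0 HL).
  exists N => j Hj; apply: le_lt_trans (Hiii_lip _ _) _.
  by rewrite mulrC -ltr_pdivlMr //; exact: HN.
have cwx1 : cvv (fun j => w - xs (phi j).+1)%R (w - xbar)%R.
  move=> e e0; have [N HN] := Hc1 e e0.
  exists N => j Hj; have -> : (w - xs (phi j).+1 - (w - xbar) = xbar - xs (phi j).+1)%R.
    by rewrite opprB addrC addrA subrK.
  rewrite (norm2B xbar); exact: HN.
have cdot := cvv_dot cgh cwx1.
have cN := cvv_normsub (w:=w) Hc.
have Hu : (fun j => fr (xs (phi j).+1) - Cs (phi j) * g (xs (phi j).+1))%R @ \oo --> (fr xbar - Cb * g xbar)%R.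
  by apply: cvgB => //; exact: cvgM.
have Hvv : (fun j => fr w - Cs (phi j) * g w + norm2 (w - xs (phi j)) * norm2 (w - xs (phi j)) / (2 * alow)
            + dot (gradh (xs (phi j))) (w - xs (phi j).+1))%R @ \oo -->
          (fr w - Cb * g w + norm2 (w - xbar) * norm2 (w - xbar) / (2 * alow) + dot (gradh xbar) (w - xbar))%R.
  apply: cvgD => //; apply: cvgD.
    apply: cvgB; first exact: cvg_cst.
    exact: cvgMr_tmp.
  by apply: cvgMr_tmp; exact: cvgM.
have : (fr xbar - Cb * g xbar <= fr w - Cb * g w + norm2 (w - xbar) * norm2 (w - xbar) / (2 * alow) + dot (gradh xbar) (w - xbar))%R.
  apply: (ler_cvg_to Hu Hvv); apply: nearW => j; exact: seq_ineq.
have -> : (fr xbar - Cb * g xbar = - h xbar)%R by rewrite /Cb; field; rewrite gt_eqF.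
by [].
Qed.

Lemma stat_acc xbar (phi : nat -> nat) : (forall j, (phi j < phi j.+1)%N) ->
  cvv (fun j => xs (phi j)) xbar -> stationary F xbar.
Proof.
move=> Hphi Hc.
have Pb := acc_P Hc.
have [Pb1 Pb2] := Pb.
have gb0 : (0 < g xbar)%R := Hii_pos Pb1 Pb2.
set Cb := ((fr xbar + h xbar) / g xbar)%R.
have FE0 : F xbar = Cb%:E by rewrite FE.
split; first by rewrite FE0.
move=> eps eps0.
have [d1 [K1 [d10 HK1]]] := grad_lip (Hii_grad Pb1 Pb2).
set e' := (eps * g xbar / 4)%R.
have e'0 : (0 < e')%R by rewrite /e' divr_gt0 // mulr_gt0.
have [d2 [d20 Hd2]] := Hiii_grad xbar e'0.
set d3 := (g xbar / (2 * (`|K1| + 1)))%R.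
have d30 : (0 < d3)%R by rewrite /d3 divr_gt0 // mulr_gt0 // ltr_pwDr.
set d4 := (eps * g xbar * alow / 2)%R.
have d40 : (0 < d4)%R by rewrite /d4 divr_gt0 // !mulr_gt0.
exists (Num.min d1 (Num.min d2 (Num.min d3 d4))); split.
  by rewrite !lt_min d10 d20 d30 d40.
move=> z zx; rewrite !lt_min => /and3P[Hz1 Hz2 /andP[Hz3 Hz4]].
case: (pselect (P z)) => [Pz|nPz]; last by rewrite (FnE nPz) leey.
have [Pz1 Pz2] := Pz.
rewrite FE0 FE // dot0l sub0r -EFinD lee_fin.
set r := norm2 (z - xbar).
have r0 : (0 <= r)%R := norm2_ge0 _.
have Hlim := limit_ineq Hphi Hc Pz1; rewrite -/Cb -/r in Hlim.
have Hh := Hd2 z Hz2; rewrite -/r in Hh.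
have Hg := HK1 z I Hz1; rewrite -/r in Hg.
have gz0 : (0 < g z)%R := Hii_pos Pz1 Pz2.
have gzb : (g xbar / 2 <= g z)%R.
  have : (`|K1| * r <= g xbar / 2)%R.
    rewrite /d3 in Hz3.
    have : (r * (2 * (`|K1| + 1)) < g xbar)%R by rewrite -ltr_pdivlMr // mulr_gt0 // ltr_pwDr.
    have := normr_ge0 K1; nra.
  have := ler_norm K1; move: Hg; rewrite ler_norml => /andP [H1 _].
  nra.
have HA : (r * r / (2 * alow) + e' * r <= eps * r * (g xbar / 2))%R.
  rewrite /d4 in Hz4.
  have : (r / (2 * alow) <= e')%R.
    rewrite /e' ler_pdivrMr ?mulr_gt0 //.
    have -> : (eps * g xbar / 4 * (2 * alow) = eps * g xbar * alow / 2)%R by field.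
    exact: ltW.
  have -> : (r * r / (2 * alow) = r * (r / (2 * alow)))%R by rewrite mulrA.
  rewrite /e'; nra.
have Hsum : (Cb * g z - (r * r / (2 * alow) + e' * r) <= fine (f z) + h z)%R.
  move: Hh; rewrite ler_norml => /andP [H1 _].
  rewrite /fr in Hlim; lra.
rewrite ler_pdivlMr // /fr.
have : (eps * r * (g xbar / 2) <= eps * r * g z)%R.
  by apply: ler_wpM2l => //; rewrite mulr_ge0 // ltW.
nra.
Qed.
End Main.

Local Open Scope ring_scope.
Local Open Scope ereal_scope.

Theorem mainTheorem10 (R : realType) (n : nat)
  (f : 'rV[R]_n -> \bar R) (g h : 'rV[R]_n -> R)
  (gradg gradh : 'rV[R]_n -> 'rV[R]_n) (L : R)
  (* f proper lsc *)
  (Hfprop : proper_fun f) (Hflsc : lsc f)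
  (* (i) *)
  (Hi : loc_lipschitz_on (fun x => dom f x /\ Omega g x) (fun x => fine (f x)))
  (* (ii) *)
  (Hii_grad : forall x, dom f x -> Omega g x -> is_gradient g x (gradg x))
  (Hii_lip : loc_lipschitz_on_vec (fun x => dom f x /\ Omega g x) gradg)
  (Hii_pos : forall x, dom f x -> Omega g x -> (0 < g x)%R)
  (* (iii) *)
  (Hiii_grad : forall x, is_gradient h x (gradh x))
  (HL : (0 < L)%R) (Hiii_lip : lipschitz_vec L gradh)
  (* (iv) *)
  (Hiv_nonneg : forall x, dom f x -> (0 <= fine (f x) + h x)%R)
  (Hiv_ne : exists x, dom f x /\ Omega g x)
  (* (v) *)
  (Hv : forall (x : 'rV[R]_n) (gam : R), (0 <= gam)%R ->
          exists u, in_prox (fun w => f w - (gam * g w)%:E) x u)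
  (* (vi) *)
  (Hvi_lsc : lsc (Ffrac f g h)) (Hvi_lb : level_bounded (Ffrac f g h))
  (* PPGA *)
  (alpha : nat -> R) (alow aup : R) (xs : nat -> 'rV[R]_n)
  (Halow : (0 < alow)%R) (Hale : (alow <= aup)%R) (Haup : (aup < 1 / L)%R)
  (Halpha : forall k, (alow <= alpha k <= aup)%R)
  (Hx0 : dom f (xs 0%N) /\ Omega g (xs 0%N))
  (Hstep : forall k : nat,
     in_prox (fun u => (alpha k)%:E * (f u - ((fine (Ffrac f g h (xs k))) * g u)%:E))
             (xs k - alpha k *: gradh (xs k)) (xs k.+1)) :
  bounded_seq xs /\
  (forall xbar, accumulation_point xs xbar -> stationary (Ffrac f g h) xbar).
Proof.
split.
  have [M HM] := xs_bounded Hfprop Hii_pos Hiii_grad HL Hiii_lip Hiv_nonneg Hvi_lb Halow Hale Haup Halpha Hx0 Hstep.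
  by exists M.
move=> xbar [phi [Hphi Hc]].
exact: (stat_acc Hfprop Hi Hii_grad Hii_pos Hiii_grad HL Hiii_lip Hiv_nonneg Hvi_lsc Hvi_lb Halow Hale Haup Halpha Hx0 Hstep Hphi Hc).
Qed.
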